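(* Let $\Omega\subseteq\mathbb{R}^n$ and $\varphi\in\Phi_{\mathrm w}(\Omega)$. The following are equivalent: (1) $\varphi$ satisfies condition (A2). (2) For every $\sigma>0$ there exist $\beta\in(0,1]$ and $h\in L^1(\Omega)\cap L^\infty(\Omega)$, $h\ge0$, such that for a.e. $x,y\in\Omega$: $\varphi(x,\beta t)\le\varphi(y,t)+h(x)+h(y)$ whenever $\varphi(y,t)\in[0,\sigma]$. (3) For every $\sigma>0$ there exist $\beta\in(0,1]$ and $h\in L^1(\Omega)\cap L^\infty(\Omega)$, $h\ge0$, such that for a.e. $x,y\in\Omega$: $\beta\varphi^{-1}(x,\max\{\tau,h(x)+h(y)\})\le\varphi^{-1}(y,\max\{\tau,h(x)+h(y)\})$ for all $\tau\in[0,\sigma]$. (4) For every $\sigma>0$ there exist $\beta\in(0,1]$ and $h\in L^1(\Omega)\cap L^\infty(\Omega)$, $h\ge0$, with $\|h\|_\infty\le\sigma/2$, such that for a.e. $x,y\in\Omega$: $\beta\varphi^{-1}(x,\tau)\le\varphi^{-1}(y,\tau)$ for all $\tau\in[h(x)+h(y),\sigma]$. (5) $\varphi$ satisfies condition (A0), and for every $\sigma>0$ there exist $\beta\in(0,1]$ and $h\in L^1(\Omega)\cap L^\infty(\Omega)$, $h\ge0$, such that for a.e. $x,y\in\Omega$: $\beta\varphi^{-1}(x,\tau)\le\varphi^{-1}(y,\tau)$ for all $\tau\in[h(x)+h(y),\sigma]$.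
   Context: A function $f:[0,\infty)\to[0,\infty]$ is $a$-almost increasing ($a\ge1$) if $f(s)\le a f(t)$ for all $s\le t$. A function $\varphi:\Omega\times[0,\infty)\to[0,\infty]$ is a weak $\Phi$-function, $\varphi\in\Phi_{\mathrm w}(\Omega)$, if for a.e. $x\in\Omega$: $x\mapsto\varphi(x,|f(x)|)$ is measurable for every measurable $f:\Omega\to\mathbb{R}$; $t\mapsto\varphi(x,t)$ is increasing (non-decreasing); $\varphi(x,0)=\lim_{t\to0^+}\varphi(x,t)=0$ and $\lim_{t\to\infty}\varphi(x,t)=\infty$; and $t\mapsto\varphi(x,t)/t$ is $a$-almost increasing on $(0,\infty)$ with $a\ge1$ independent of $x$. The left-inverse is $\varphi^{-1}(x,\tau):=\inf\{t\ge0:\varphi(x,t)\ge\tau\}$. Condition (A0): there exists $\beta\in(0,1]$ with $\beta\le\varphi^{-1}(x,1)\le1/\beta$ for a.e. $x\in\Omega$. Condition (A2): for every $\sigma>0$ there exist $\beta\in(0,1]$ and $h\in L^1(\Omega)\cap L^\infty(\Omega)$, $h\ge0$, such that for a.e. $x,y\in\Omega$, $\beta\varphi^{-1}(x,\tau)\le\varphi^{-1}(y,\tau+h(x)+h(y))$ for all $\tau\in[0,\sigma]$. *)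

(* Defs.v *)
From HB Require Import structures.
From mathcomp Require Import all_boot all_order all_algebra.
From mathcomp Require Import all_classical all_reals all_analysis measurable_realfun.
Set Implicit Arguments. Unset Strict Implicit. Unset Printing Implicit Defensive.
Import Order.TTheory GRing.Theory Num.Theory.
Import numFieldNormedType.Exports.
Local Open Scope classical_set_scope.
Local Open Scope ring_scope.

Section GenPhi.
Context {d : measure_display} {T : measurableType d} {R : realType}.
Variables (mu : {measure set T -> \bar R}) (Omega : set T).

Definition ae2 (P : T -> T -> Prop) : Prop :=
  exists N : set T, mu.-negligible N /\
    forall x y, Omega x -> Omega y -> ~ N x -> ~ N y -> P x y.

(* phi : Omega x [0,oo) -> [0,oo] is a weak Phi-function (values at t < 0
   are irrelevant and unconstrained). *)
Definition weak_Phi (phi : T -> R -> \bar R) : Prop :=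
  [/\ (forall x t, Omega x -> 0 <= t -> (0 <= phi x t)%E),
      (forall f : T -> R, measurable_fun Omega f ->
          measurable_fun Omega ((fun x => phi x `|f x|) : T -> \bar R)) &
      exists a : R, 1 <= a /\
        {ae mu, forall x, Omega x ->
          [/\ (forall s t, 0 <= s -> s <= t -> (phi x s <= phi x t)%E),
              phi x 0 = 0%E,
              phi x t @[t --> 0^'+] --> 0%E,
              phi x t @[t --> +oo] --> +oo%E &
              (forall s t, 0 < s -> s <= t ->
                 (phi x s * (s^-1)%:E <= a%:E * (phi x t * (t^-1)%:E))%E)]}].

Definition phi_inv (phi : T -> R -> \bar R) (x : T) (tau : R) : R :=
  inf [set t : R | 0 <= t /\ (tau%:E <= phi x t)%E].

Definition L1Linf_nonneg (h : T -> R) : Prop :=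
  [/\ measurable_fun Omega h,
      (forall x, Omega x -> 0 <= h x),
      mu.-integrable Omega (EFin \o h) &
      exists M : R, {ae mu, forall x, Omega x -> h x <= M}].

Definition cond_A0 (phi : T -> R -> \bar R) : Prop :=
  exists beta : R, [/\ 0 < beta, beta <= 1 &
    {ae mu, forall x, Omega x ->
       beta <= phi_inv phi x 1 /\ phi_inv phi x 1 <= beta^-1}].

Definition cond_A2 (phi : T -> R -> \bar R) : Prop :=
  forall sigma : R, 0 < sigma ->
    exists beta : R, exists h : T -> R,
      [/\ 0 < beta, beta <= 1, L1Linf_nonneg h &
        ae2 (fun x y => forall tau, 0 <= tau -> tau <= sigma ->
          beta * phi_inv phi x tau <= phi_inv phi y (tau + h x + h y))].

End GenPhi.

(* Main.v *)
Require Import Defs.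
From HB Require Import structures.
From mathcomp Require Import all_boot all_order all_algebra.
From mathcomp Require Import all_classical all_reals all_analysis measurable_realfun.
From mathcomp Require Import ring lra unstable.
Import Order.TTheory GRing.Theory Num.Theory.
Import numFieldNormedType.Exports.
Local Open Scope classical_set_scope.
Local Open Scope ring_scope.
Section PsiLemmas.
Context {d : measure_display} {T : measurableType d} {R : realType}.
Variables (phi : T -> R -> \bar R) (x : T).
Hypothesis Hnn : forall t, 0 <= t -> (0 <= phi x t)%E.
Hypothesis Hmono : forall s t, 0 <= s -> s <= t -> (phi x s <= phi x t)%E.
Hypothesis Hinf : phi x t @[t --> +oo] --> +oo%E.

Let S tau := [set t : R | 0 <= t /\ (tau%:E <= phi x t)%E].

Lemma psi_ge0 tau : 0 <= phi_inv phi x tau.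
Proof.
rewrite /phi_inv; have [ne|ne] := pselect ([set t : R | 0 <= t /\ (tau%:E <= phi x t)%E] !=set0).
  by apply: lb_le_inf => // t [].
by rewrite inf_out // => -[].
Qed.

Lemma psi_le tau t : 0 <= t -> (tau%:E <= phi x t)%E -> phi_inv phi x tau <= t.
Proof.
move=> t0 ht; apply: ge_inf => //; by exists 0 => s [].
Qed.

Lemma psi_ne tau : [set t : R | 0 <= t /\ (tau%:E <= phi x t)%E] !=set0.
Proof.
have := (cvgeyPge _).1 Hinf tau; move=> [M [Mr HM]].
exists (Num.max 0 M + 1); split; first by rewrite addr_ge0 // le_max lexx.
apply: HM; rewrite (@le_lt_trans _ _ (Num.max 0 M)) // ?ltrDl // le_max lexx orbT //.
Qed.

Lemma psi_gt tau t : phi_inv phi x tau < t -> (tau%:E <= phi x t)%E.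
Proof.
move=> lt; have [s [s0 hs] st] := inf_lt (psi_ne tau) lt.
by apply: (le_trans hs); apply: Hmono => //; apply: ltW.
Qed.

Lemma psi_mono t1 t2 : t1 <= t2 -> phi_inv phi x t1 <= phi_inv phi x t2.
Proof.
move=> le; apply: lb_le_inf; first exact: psi_ne.
move=> t [t0 ht]; apply: psi_le => //; apply: le_trans ht; by rewrite lee_fin.
Qed.

Lemma psi0 tau : tau <= 0 -> phi_inv phi x tau = 0.
Proof.
move=> le; apply/eqP; rewrite eq_le psi_ge0 andbT; apply: psi_le => //.
by apply: (@le_trans _ _ 0%E); [rewrite lee_fin | exact: Hnn].
Qed.


Hypothesis H0 : phi x t @[t --> 0^'+] --> 0%E.

Lemma psi_gt0 tau : 0 < tau -> 0 < phi_inv phi x tau.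
Proof.
move=> t0; rewrite lt_neqAle psi_ge0 andbT; apply/eqP => e.
have : (tau%:E <= 0)%E.
  apply: (cvge_to_ge H0); near=> t; apply: psi_gt; rewrite -e.
  near: t; exact: nbhs_right_gt.
by rewrite lee_fin leNgt t0.
Unshelve. all: end_near.
Qed.

Variable a : R.
Hypothesis Ha : 1 <= a.
Hypothesis Halm : forall s t, 0 < s -> s <= t ->
  (phi x s * (s^-1)%:E <= a%:E * (phi x t * (t^-1)%:E))%E.

Lemma ext_scale (lam M w : R) : 1 <= lam -> 0 < w -> (M%:E <= phi x w)%E ->
  ((lam * M)%:E <= phi x (a * lam * w))%E.
Proof.
move=> l1 w0 hM.
have al1 : 1 <= a * lam by rewrite -[1]mulr1 ler_pM.
have alw : w <= a * lam * w by rewrite ler_peMl // ltW.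
have alw0 : 0 <= a * lam * w by apply: le_trans alw; apply: ltW.
have H := Halm w (a * lam * w) w0 alw.
have := Hnn _ (ltW w0); have := Hnn _ alw0.
case E2: (phi x (a * lam * w)) => [r| |]; [ | by move=> _ _; rewrite leey | by rewrite leeNy_eq].
case E1: (phi x w) => [p| |] _; [ | | by rewrite leeNy_eq].
- move: H hM; rewrite E1 E2 -!EFinM !lee_fin => H hM _.
  have lam0 : 0 < lam := lt_le_trans ltr01 l1.
  have a0 : 0 < a := lt_le_trans ltr01 Ha.
  have eqr : r = a * (r * (a * lam * w)^-1) * (lam * w).
    by field; rewrite !gt_eqF.
  have eqp : p = p * w^-1 * w by field; rewrite gt_eqF.
  rewrite eqr (@le_trans _ _ (p * w^-1 * (lam * w))) //; last first.
    by rewrite ler_wpM2r // mulr_ge0 // ltW.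
  rewrite mulrA (mulrC (p * w^-1)) -mulrA -eqp.
  by rewrite ler_wpM2l // ltW.
- move: H; rewrite E1 E2 -!EFinM gt0_mulye ?lte_fin ?invr_gt0 //.
Qed.

Lemma psi_scale (lam M : R) : 0 < M -> 1 <= lam ->
  phi_inv phi x (lam * M) <= a * lam * phi_inv phi x M.
Proof.
move=> M0 l1; have al0 : 0 < a * lam by apply: mulr_gt0; apply: lt_le_trans ltr01 _.
apply/ler_gtP => z hz.
have w0 : 0 < z / (a * lam).
  by rewrite divr_gt0 //; apply: le_lt_trans hz; rewrite mulr_ge0 ?psi_ge0 // ltW.
have hw : phi_inv phi x M < z / (a * lam) by rewrite ltr_pdivlMr // mulrC.
have := @ext_scale lam M _ l1 w0 (@psi_gt M _ hw).
have -> : a * lam * (z / (a * lam)) = z by rewrite mulrC divfK // gt_eqF.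
move=> h; apply: psi_le => //; apply: ltW; apply: le_lt_trans hz.
by rewrite mulr_ge0 ?psi_ge0 // ltW.
Qed.

End PsiLemmas.

Section Main.
Context {d : measure_display} {T : measurableType d} {R : realType}.
Variables (mu : {measure set T -> \bar R}) (Omega : set T).

Lemma ae_to_N {P : T -> Prop} : {ae mu, forall x, Omega x -> P x} ->
  exists N, mu.-negligible N /\ forall x, Omega x -> ~ N x -> P x.
Proof.
move=> H; exists (~` [set x | Omega x -> P x]); split => // x Ox nN.
case: (pselect (Omega x -> P x)) => [/(_ Ox)//|h]; by case: (nN h).
Qed.

Lemma N_to_ae {P : T -> Prop} N : mu.-negligible N ->
  (forall x, Omega x -> ~ N x -> P x) -> {ae mu, forall x, Omega x -> P x}.
Proof.
move=> nN HN; apply: negligibleS nN => x /= nP.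
have [//|h] := pselect (N x); by exfalso; apply: nP => Ox; apply: HN.
Qed.

Lemma L1_scale (mOmega : measurable Omega) (h : T -> R) (c : R) : 0 < c -> L1Linf_nonneg mu Omega h ->
  L1Linf_nonneg mu Omega (fun x => c * h x).
Proof.
move=> c0 [mh h0 ih [K HK]]; split.
- by apply: measurable_funM => //; exact: measurable_cst.
- by move=> x Ox; rewrite mulr_ge0 ?h0 // ltW.
- by have := integrableZl mOmega c ih.
- exists (c * K); have [N [nN HN]] := ae_to_N HK.
  apply: (@N_to_ae (fun x => c * h x <= c * K) _ nN) => x Ox nx /=; rewrite ler_pM2l //; exact: HN.
Qed.

End Main.

Section Impl.
Context {d : measure_display} {T : measurableType d} {R : realType}.
Variables (mu : {measure set T -> \bar R}) (Omega : set T).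
Hypothesis mOmega : measurable Omega.
Variables (phi : T -> R -> \bar R) (a : R).
Hypothesis Ha : 1 <= a.
Hypothesis Hnn : forall x t, Omega x -> 0 <= t -> (0 <= phi x t)%E.
Variable N0 : set T.
Hypothesis nN0 : mu.-negligible N0.
Hypothesis Hg : forall x, Omega x -> ~ N0 x ->
  [/\ (forall s t, 0 <= s -> s <= t -> (phi x s <= phi x t)%E),
      phi x 0 = 0%E,
      phi x t @[t --> 0^'+] --> 0%E,
      phi x t @[t --> +oo] --> +oo%E &
      (forall s t, 0 < s -> s <= t ->
         (phi x s * (s^-1)%:E <= a%:E * (phi x t * (t^-1)%:E))%E)].

Local Notation psi := (phi_inv phi).
Local Notation aeN := (@ae_to_N _ _ _ mu Omega _).
Local Notation Nae := (@N_to_ae _ _ _ mu Omega _).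

Lemma gle {x tau t} : 0 <= t -> (tau%:E <= phi x t)%E -> psi x tau <= t.
Proof. exact: psi_le. Qed.

Lemma ggt {x tau t} : Omega x -> ~ N0 x -> psi x tau < t -> (tau%:E <= phi x t)%E.
Proof. by move=> Ox nx; have [m _ _ hi _] := Hg x Ox nx; exact: psi_gt. Qed.

Lemma gmono {x t1 t2} : Omega x -> ~ N0 x -> t1 <= t2 -> psi x t1 <= psi x t2.
Proof. by move=> Ox nx; have [m _ _ hi _] := Hg x Ox nx; exact: psi_mono. Qed.

Lemma g0 {x tau} : Omega x -> tau <= 0 -> psi x tau = 0.
Proof. by move=> Ox; apply: psi0 => t; exact: Hnn. Qed.

Lemma ggt0 {x tau} : Omega x -> ~ N0 x -> 0 < tau -> 0 < psi x tau.
Proof. by move=> Ox nx; have [m _ l0 hi _] := Hg x Ox nx; exact: psi_gt0. Qed.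

Lemma gscale {x lam M} : Omega x -> ~ N0 x -> 0 < M -> 1 <= lam ->
  psi x (lam * M) <= a * lam * psi x M.
Proof.
move=> Ox nx; have [m _ _ hi al] := Hg x Ox nx.
by apply: psi_scale => // t; exact: Hnn.
Qed.

Lemma notU {A B : set T} {z} : ~ (A `|` B) z -> ~ A z /\ ~ B z.
Proof. by move=> h; split => hh; apply: h; [left|right]. Qed.

Lemma i12 : cond_A2 mu Omega phi ->
       forall sigma : R, 0 < sigma ->
         exists beta : R, exists h : T -> R,
           [/\ 0 < beta, beta <= 1, L1Linf_nonneg mu Omega h &
             ae2 mu Omega (fun x y => forall t : R, 0 <= t ->
               (0 <= phi y t)%E -> (phi y t <= sigma%:E)%E ->
               (phi x (beta * t)%R <= phi y t + (h x + h y)%:E)%E)].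
Proof.
move=> A2 sigma s0.
have s2 : 0 < 2 * sigma by rewrite mulr_gt0.
have [beta [h [b0 b1 Lh [N1 [nN1 HN1]]]]] := A2 (2 * sigma) s2.
have [_ h0 _ _] := Lh.
exists (beta / 2); exists h; split => //; first by rewrite divr_gt0.
  by lra.
exists (N0 `|` N1); split; first exact: negligibleU.
move=> x y Ox Oy nx ny t t0.
have [nx0 nx1] := notU nx; have [ny0 ny1] := notU ny.
have hx := h0 x Ox; have hy := h0 y Oy.
case: (eqVneq t 0) => [->|tn0].
  move=> _ _; rewrite mulr0; have [_ -> _ _ _] := Hg x Ox nx0.
  by rewrite adde_ge0 // ?lee_fin ?addr_ge0 //; apply: Hnn.
have tp : 0 < t by rewrite lt_neqAle eq_sym tn0 t0.
case E: (phi y t) => [tau| |] py0 pys; last 2 first.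
- by rewrite leye_eq in pys.
- by rewrite leeNy_eq in py0.
move: py0 pys; rewrite !lee_fin => py0 pys.
rewrite -EFinD; apply/lee_addgt0Pr => e e0; rewrite -EFinD.
have me0 : 0 < Num.min e sigma by rewrite lt_min e0 s0.
have mes : Num.min e sigma <= sigma by rewrite ge_min lexx orbT.
have mee : Num.min e sigma <= e by rewrite ge_min lexx.
set taup := tau + Num.min e sigma.
have t_le : t <= psi y taup.
  rewrite leNgt; apply/negP => lt; have := ggt Oy ny0 lt.
  by rewrite E lee_fin /taup; lra.
have taup0 : 0 <= taup.
  rewrite /taup; lra.
have taups : taup <= 2 * sigma by rewrite /taup; lra.
have A := HN1 y x Oy Ox ny1 nx1 taup taup0 taups.
have lt1 : beta / 2 * t < psi x (taup + h y + h x).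
  apply: lt_le_trans A.
  apply: (@lt_le_trans _ _ (beta * t)); first by rewrite ltr_pM2r //; lra.
  by rewrite ler_pM2l.
have : (phi x (beta / 2 * t) < (taup + h y + h x)%:E)%E.
  rewrite ltNge; apply/negP => le.
  have bt0 : 0 <= beta / 2 * t by rewrite mulr_ge0 // divr_ge0 // ltW.
  by have := gle bt0 le; rewrite leNgt lt1.
move/ltW/le_trans; apply; rewrite lee_fin /taup; lra.
Qed.

Lemma L1gen x y beta H S M : Omega x -> ~ N0 x -> Omega y -> ~ N0 y ->
  0 < beta -> 0 <= H -> 0 < M -> M <= S ->
  (forall t, 0 <= t -> (0 <= phi x t)%E -> (phi x t <= S%:E)%E ->
     (phi y (beta * t) <= phi x t + H%:E)%E) ->
  beta * psi x M <= psi y (M + H).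
Proof.
move=> Ox nx Oy ny b0 H0 M0 MS Hyp.
rewrite leNgt; apply/negP => lt.
set q := psi y (M + H) / beta.
have eq : q * beta = psi y (M + H) by rewrite /q divfK // gt_eqF.
have q0 : 0 <= q by rewrite /q divr_ge0 ?psi_ge0 // ltW.
have qlt : q < psi x M by rewrite -(ltr_pM2r b0) eq mulrC.
set t := (q + psi x M) / 2.
have t0 : 0 <= t by rewrite /t; lra.
have tlt : t < psi x M by rewrite /t; lra.
have gtb : psi y (M + H) < beta * t.
  by rewrite -eq mulrC ltr_pM2l // /t; lra.
have px : (phi x t < M%:E)%E.
  rewrite ltNge; apply/negP => le.
  by have := gle t0 le; rewrite leNgt tlt.
have pxn := Hnn x t Ox t0.
have Ht : (phi x t <= S%:E)%E by apply: le_trans (ltW px) _; rewrite lee_fin.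
have A := Hyp t t0 pxn Ht.
have B := ggt Oy ny gtb.
move: px A pxn; case: (phi x t) => [p| |] px A pxn; last 2 first.
- by move: px; rewrite ltNge leey.
- by rewrite leeNy_eq in pxn.
have := le_trans B A; rewrite -EFinD lee_fin; rewrite lte_fin in px; lra.
Qed.

Lemma i23 :
       (forall sigma : R, 0 < sigma ->
         exists beta : R, exists h : T -> R,
           [/\ 0 < beta, beta <= 1, L1Linf_nonneg mu Omega h &
             ae2 mu Omega (fun x y => forall t : R, 0 <= t ->
               (0 <= phi y t)%E -> (phi y t <= sigma%:E)%E ->
               (phi x (beta * t)%R <= phi y t + (h x + h y)%:E)%E)]) ->
       forall sigma : R, 0 < sigma ->
         exists beta : R, exists h : T -> R,
           [/\ 0 < beta, beta <= 1, L1Linf_nonneg mu Omega h &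
             ae2 mu Omega (fun x y => forall tau : R, 0 <= tau -> tau <= sigma ->
               beta * phi_inv phi x (Num.max tau (h x + h y))
                 <= phi_inv phi y (Num.max tau (h x + h y)))].
Proof.
move=> H2 sigma s0.
have [beta [h [b0 b1 Lh [N1 [nN1 HN1]]]]] := H2 sigma s0.
have [mh h0 ih [K HK]] := Lh.
have [N2 [nN2 HN2]] := aeN HK.
set Kp := Num.max K (sigma / 2).
have Kps : sigma / 2 <= Kp by rewrite le_max lexx orbT.
have Kp0 : 0 < Kp by apply: lt_le_trans Kps; lra.
set c := sigma / (2 * Kp).
have c0 : 0 < c by rewrite /c divr_gt0 // mulr_gt0.
have cK : c * Kp = sigma / 2 by rewrite /c; field; rewrite gt_eqF.
have c1 : c <= 1.
  by rewrite /c ler_pdivrMr ?mulr_gt0 // mul1r; lra.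
have ch : forall x, Omega x -> ~ N2 x -> c * h x <= sigma / 2.
  move=> x Ox nx; rewrite -cK ler_pM2l //; apply: le_trans (HN2 x Ox nx) _.
  by rewrite le_max lexx.
have a0 : 0 < a := lt_le_trans ltr01 Ha.
have ci0 : 0 < c^-1 by rewrite invr_gt0.
set D := a * (1 + c^-1).
have D0 : 0 < D by rewrite /D mulr_gt0 //; lra.
exists (beta / D); exists (fun x => c * h x); split.
- by rewrite divr_gt0.
- rewrite ler_pdivrMr // mul1r; apply: le_trans b1 _.
  by rewrite /D -[1]mulr1 ler_pM //; lra.
- exact: (@L1_scale _ _ _ mu Omega mOmega _ _ c0 Lh).
exists (N0 `|` N1 `|` N2); split; first by apply: negligibleU => //; apply: negligibleU.
move=> x y Ox Oy nx ny tau t0 ts /=.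
have [nx01 nx2] := notU nx; have [nx0 nx1] := notU nx01.
have [ny01 ny2] := notU ny; have [ny0 ny1] := notU ny01.
have hx := h0 x Ox; have hy := h0 y Oy.
have chx := ch x Ox nx2; have chy := ch y Oy ny2.
set M := Num.max tau (c * h x + c * h y).
have M0 : 0 <= M by rewrite le_max t0.
have Ms : M <= sigma by rewrite ge_max ts /=; lra.
have cH : c * (h y + h x) <= M by rewrite le_max mulrDr addrC lexx orbT.
have [M00|Mp] : M = 0 \/ 0 < M.
  by move: M0; rewrite le_eqVlt => /orP[/eqP <-|->]; [left|right].
  by rewrite M00 !g0 // mulr0.
have L := @L1gen x y beta (h y + h x) sigma M Ox nx0 Oy ny0 b0 (addr_ge0 hy hx) Mp Ms
  (fun t t0 p0 ps => HN1 y x Oy Ox ny1 nx1 t t0 p0 ps).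
have HM : h y + h x <= c^-1 * M.
  by rewrite -(ler_pM2l c0) mulrA mulfV ?gt_eqF // mul1r.
have L2 : psi y (M + (h y + h x)) <= psi y ((1 + c^-1) * M).
  by apply: gmono => //; rewrite mulrDl mul1r lerD2l.
have c1' : 1 <= 1 + c^-1 by rewrite lerDl ltW.
have L3 := @gscale y (1 + c^-1) M Oy ny0 Mp c1'.
rewrite mulrAC ler_pdivrMr // [psi y M * _]mulrC.
apply: (le_trans L); apply: (le_trans L2); apply: (le_trans L3).
by rewrite /D lexx.
Qed.

Lemma i34 :
       (forall sigma : R, 0 < sigma ->
         exists beta : R, exists h : T -> R,
           [/\ 0 < beta, beta <= 1, L1Linf_nonneg mu Omega h &
             ae2 mu Omega (fun x y => forall tau : R, 0 <= tau -> tau <= sigma ->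
               beta * phi_inv phi x (Num.max tau (h x + h y))
                 <= phi_inv phi y (Num.max tau (h x + h y)))]) ->
       forall sigma : R, 0 < sigma ->
         exists beta : R, exists h : T -> R,
           [/\ 0 < beta, beta <= 1, L1Linf_nonneg mu Omega h,
             {ae mu, forall x, Omega x -> h x <= sigma / 2} &
             ae2 mu Omega (fun x y => forall tau : R, h x + h y <= tau -> tau <= sigma ->
               beta * phi_inv phi x tau <= phi_inv phi y tau)].
Proof.
move=> H3 sigma s0.
have [beta [h [b0 b1 Lh [N1 [nN1 HN1]]]]] := H3 sigma s0.
have [mh h0 ih [K HK]] := Lh.
have [N2 [nN2 HN2]] := aeN HK.
set Kp := Num.max K (sigma / 2).
have Kps : sigma / 2 <= Kp by rewrite le_max lexx orbT.
have Kp0 : 0 < Kp by apply: lt_le_trans Kps; lra.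
set c := sigma / (2 * Kp).
have c0 : 0 < c by rewrite /c divr_gt0 // mulr_gt0.
have cK : c * Kp = sigma / 2 by rewrite /c; field; rewrite gt_eqF.
have c1 : c <= 1.
  by rewrite /c ler_pdivrMr ?mulr_gt0 // mul1r; lra.
have ch : forall x, Omega x -> ~ N2 x -> c * h x <= sigma / 2.
  move=> x Ox nx; rewrite -cK ler_pM2l //; apply: le_trans (HN2 x Ox nx) _.
  by rewrite le_max lexx.
have a0 : 0 < a := lt_le_trans ltr01 Ha.
have ci0 : 0 < c^-1 by rewrite invr_gt0.
have ci1 : 1 <= c^-1 by rewrite -(ler_pM2l c0) mulr1 mulfV ?gt_eqF.
exists (beta * c / a); exists (fun x => c * h x); split.
- by rewrite divr_gt0 // mulr_gt0.
- rewrite ler_pdivrMr // mul1r; apply: le_trans Ha.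
  by rewrite mulr_ile1 // ltW.
- exact: (@L1_scale _ _ _ mu Omega mOmega _ _ c0 Lh).
- exact: (Nae N2 nN2 ch).
exists (N0 `|` N1 `|` N2); split; first by apply: negligibleU => //; apply: negligibleU.
move=> x y Ox Oy nx ny tau hl ts /=.
have [nx01 nx2] := notU nx; have [nx0 nx1] := notU nx01.
have [ny01 ny2] := notU ny; have [ny0 ny1] := notU ny01.
have hx := h0 x Ox; have hy := h0 y Oy.
have t0 : 0 <= tau.
  by apply: le_trans hl; rewrite addr_ge0 // mulr_ge0 // ltW.
have A := HN1 x y Ox Oy nx1 ny1 tau t0 ts.
case: (eqVneq tau 0) => [->|tn0].
  by rewrite !g0 // mulr0.
have tp : 0 < tau by rewrite lt_neqAle eq_sym tn0 t0.
set M := Num.max tau (h x + h y) in A.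
have B : psi x tau <= psi x M by apply: gmono => //; rewrite le_max lexx.
have C : M <= c^-1 * tau.
  rewrite ge_max; apply/andP; split; first by rewrite ler_peMl.
  by rewrite -(ler_pM2l c0) mulrA mulfV ?gt_eqF // mul1r mulrDr.
have D : psi y M <= a * c^-1 * psi y tau.
  apply: (le_trans (gmono Oy ny0 C)); exact: gscale.
have key : beta * psi x tau <= a * c^-1 * psi y tau.
  apply: (le_trans _ D); apply: (le_trans _ A); rewrite ler_pM2l //.
have -> : beta * c / a * psi x tau = (c / a) * (beta * psi x tau) by ring.
apply: (le_trans (ler_wpM2l _ key)); first by rewrite divr_ge0 // ltW.
rewrite le_eqVlt; apply/orP; left; apply/eqP; field.
by rewrite !gt_eqF.
Qed.

Lemma i45 :
       (forall sigma : R, 0 < sigma ->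
         exists beta : R, exists h : T -> R,
           [/\ 0 < beta, beta <= 1, L1Linf_nonneg mu Omega h,
             {ae mu, forall x, Omega x -> h x <= sigma / 2} &
             ae2 mu Omega (fun x y => forall tau : R, h x + h y <= tau -> tau <= sigma ->
               beta * phi_inv phi x tau <= phi_inv phi y tau)]) ->
       cond_A0 mu Omega phi /\
       forall sigma : R, 0 < sigma ->
         exists beta : R, exists h : T -> R,
           [/\ 0 < beta, beta <= 1, L1Linf_nonneg mu Omega h &
             ae2 mu Omega (fun x y => forall tau : R, h x + h y <= tau -> tau <= sigma ->
               beta * phi_inv phi x tau <= phi_inv phi y tau)].
Proof.
move=> H4; split; last first.
  move=> sigma s0; have [beta [h [b0 b1 Lh _ HN]]] := H4 sigma s0.
  by exists beta; exists h; split.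
have a0 : 0 < a := lt_le_trans ltr01 Ha.
have two0 : (0:R) < 2 by lra.
have [beta [h [b0 b1 Lh Hb [N1 [nN1 HN1]]]]] := H4 2 two0.
have [_ h0 _ _] := Lh.
have [N2 [nN2 HN2]] := aeN Hb.
set N := N0 `|` N1 `|` N2.
have nN : mu.-negligible N by apply: negligibleU => //; apply: negligibleU.
case: (pselect (exists x0, Omega x0 /\ ~ N x0)) => [[x0 [Ox0 nx]]|nex]; last first.
  exists 1; split => //; apply: (Nae N nN) => x Ox nx.
  by exfalso; apply: nex; exists x.
have [nx01 nx2] := notU nx; have [nx0 nx1] := notU nx01.
set p := psi x0 2.
have p0 : 0 < p by apply: ggt0.
set c1 := beta * p; set c2 := p / beta.
have c10 : 0 < c1 by rewrite mulr_gt0.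
have c20 : 0 < c2 by rewrite divr_gt0.
set b := Num.min 1 (Num.min (c1 / (2 * a)) (c2^-1)).
have bp : 0 < b.
  by rewrite !lt_min ltr01 divr_gt0 ?invr_gt0 // mulr_gt0.
have b1' : b <= c1 / (2 * a) by rewrite !ge_min lexx orbT.
have b2' : b <= c2^-1 by rewrite !ge_min lexx !orbT.
exists b; split => //; first by rewrite ge_min lexx.
apply: (Nae N nN) => y Oy ny.
have [ny01 ny2] := notU ny; have [ny0 ny1] := notU ny01.
have hx := h0 x0 Ox0; have hy := h0 y Oy.
have hx1 := HN2 x0 Ox0 nx2; have hy1 := HN2 y Oy ny2.
have A := HN1 x0 y Ox0 Oy nx1 ny1 2 (_ : _ <= 2) (lexx _).
have B := HN1 y x0 Oy Ox0 ny1 nx1 2 (_ : _ <= 2) (lexx _).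
have m12 : psi y 1 <= psi y 2 by apply: gmono => //; lra.
have s12 : psi y 2 <= a * 2 * psi y 1.
  by have := @gscale y 2 1 Oy ny0 ltr01 (_ : 1 <= 2); rewrite mulr1; apply; lra.
split.
- apply: (le_trans b1'); rewrite ler_pdivrMr ?mulr_gt0 //.
  apply: (le_trans (A _)); first by lra.
  by apply: (le_trans s12); rewrite [a * 2]mulrC [X in X <= _]mulrC.
- rewrite -(ler_pM2l bp) mulfV ?gt_eqF //.
  apply: (@le_trans _ _ (c2^-1 * c2)); last by rewrite mulVf ?gt_eqF.
  apply: ler_pM => //; first by rewrite ltW.
  by rewrite psi_ge0.
  apply: (le_trans m12); rewrite /c2 ler_pdivlMr // mulrC; apply: B; lra.
Qed.

Lemma i51 :
       (cond_A0 mu Omega phi /\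
       forall sigma : R, 0 < sigma ->
         exists beta : R, exists h : T -> R,
           [/\ 0 < beta, beta <= 1, L1Linf_nonneg mu Omega h &
             ae2 mu Omega (fun x y => forall tau : R, h x + h y <= tau -> tau <= sigma ->
               beta * phi_inv phi x tau <= phi_inv phi y tau)]) ->
       cond_A2 mu Omega phi.
Proof.
move=> [[b0' [b00 b01 HA0]] H5] sigma s0.
have a0 : 0 < a := lt_le_trans ltr01 Ha.
have [N3 [nN3 HN3]] := aeN HA0.
have s2 : 0 < 2 * sigma by rewrite mulr_gt0.
have [beta [h [b0 b1 Lh [N1 [nN1 HN1]]]]] := H5 (2 * sigma) s2.
have [_ h0 _ _] := Lh.
set m := Num.min sigma 1; set Mx := Num.max sigma 1.
have m0 : 0 < m by rewrite lt_min s0 ltr01.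
have m1 : m <= 1 by rewrite ge_min lexx orbT.
have ms : m <= sigma by rewrite ge_min lexx.
have Mx1 : 1 <= Mx by rewrite le_max lexx orbT.
have Mxs : sigma <= Mx by rewrite le_max lexx.
have Mx0 : 0 < Mx by apply: lt_le_trans Mx1.
set U := a * Mx / b0'; set Lo := b0' * m / a.
have U0 : 0 < U by rewrite /U divr_gt0 // mulr_gt0.
have Lo0 : 0 < Lo by rewrite /Lo divr_gt0 // mulr_gt0.
exists (Num.min beta (Lo / U)); exists h; split.
- by rewrite lt_min b0 divr_gt0.
- by rewrite ge_min b1.
- exact: Lh.
exists (N0 `|` N1 `|` N3); split; first by apply: negligibleU => //; apply: negligibleU.
move=> x y Ox Oy nx ny tau t0 ts.
have [nx01 nx3] := notU nx; have [nx0 nx1] := notU nx01.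
have [ny01 ny3] := notU ny; have [ny0 ny1] := notU ny01.
have hx := h0 x Ox; have hy := h0 y Oy.
have px0 := @psi_ge0 _ _ _ phi x tau.
case: (leP (h x + h y) sigma) => [Hs|Hs].
- have A := HN1 x y Ox Oy nx1 ny1 (tau + (h x + h y)) (_ : _ <= _) (_ : _ <= _).
  rewrite -addrA; apply: (le_trans _ (A _ _)); last 2 first.
  + by rewrite lerDr.
  + lra.
  apply: (@le_trans _ _ (beta * psi x tau)); first by rewrite ler_wpM2r // ge_min lexx.
  apply: ler_wpM2l; first exact: ltW.
  by apply: gmono => //; rewrite lerDl addr_ge0.
- have px : psi x tau <= U.
    apply: (le_trans (gmono Ox nx0 ts)).
    apply: (@le_trans _ _ (psi x (Mx * 1))); first by apply: gmono => //; rewrite mulr1.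
    apply: (le_trans (gscale Ox nx0 ltr01 Mx1)).
    have [_ hb] := HN3 x Ox nx3.
    by rewrite /U; apply: ler_wpM2l => //; rewrite mulr_ge0 // ltW.
  have py : Lo <= psi y (tau + h x + h y).
    apply: (@le_trans _ _ (psi y m)); last first.
      by apply: gmono => //; lra.
    have [hb _] := HN3 y Oy ny3.
    have mi1 : 1 <= m^-1 by rewrite -(ler_pM2l m0) mulr1 mulfV ?gt_eqF.
    have G := @gscale y (m^-1) m Oy ny0 m0 mi1.
    rewrite mulVf ?gt_eqF // in G.
    have := le_trans hb G; rewrite /Lo ler_pdivrMr // => H.
    apply: (@le_trans _ _ (a / m * psi y m * m)); first by rewrite ler_wpM2r // ltW.
    by rewrite le_eqVlt; apply/orP; left; apply/eqP; field; rewrite gt_eqF.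
  apply: (le_trans _ py).
  apply: (@le_trans _ _ (Lo / U * psi x tau)); first by rewrite ler_wpM2r // ge_min lexx orbT.
  apply: (@le_trans _ _ (Lo / U * U)); first by rewrite ler_wpM2l // divr_ge0 // ltW.
  by rewrite divfK ?gt_eqF.
Qed.

Lemma all5 :
  [<-> cond_A2 mu Omega phi;
       forall sigma : R, 0 < sigma ->
         exists beta : R, exists h : T -> R,
           [/\ 0 < beta, beta <= 1, L1Linf_nonneg mu Omega h &
             ae2 mu Omega (fun x y => forall t : R, 0 <= t ->
               (0 <= phi y t)%E -> (phi y t <= sigma%:E)%E ->
               (phi x (beta * t)%R <= phi y t + (h x + h y)%:E)%E)];
       forall sigma : R, 0 < sigma ->
         exists beta : R, exists h : T -> R,
           [/\ 0 < beta, beta <= 1, L1Linf_nonneg mu Omega h &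
             ae2 mu Omega (fun x y => forall tau : R, 0 <= tau -> tau <= sigma ->
               beta * phi_inv phi x (Num.max tau (h x + h y))
                 <= phi_inv phi y (Num.max tau (h x + h y)))];
       forall sigma : R, 0 < sigma ->
         exists beta : R, exists h : T -> R,
           [/\ 0 < beta, beta <= 1, L1Linf_nonneg mu Omega h,
             {ae mu, forall x, Omega x -> h x <= sigma / 2} &
             ae2 mu Omega (fun x y => forall tau : R, h x + h y <= tau -> tau <= sigma ->
               beta * phi_inv phi x tau <= phi_inv phi y tau)];
       cond_A0 mu Omega phi /\
       forall sigma : R, 0 < sigma ->
         exists beta : R, exists h : T -> R,
           [/\ 0 < beta, beta <= 1, L1Linf_nonneg mu Omega h &
             ae2 mu Omega (fun x y => forall tau : R, h x + h y <= tau -> tau <= sigma ->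
               beta * phi_inv phi x tau <= phi_inv phi y tau)]].
Proof.
tfae.
- exact: i12.
- exact: i23.
- exact: i34.
- exact: i45.
- exact: i51.
Qed.

End Impl.

Theorem proposition3p1 (d : measure_display) (T : measurableType d)
  (R : realType) (mu : {measure set T -> \bar R}) (Omega : set T)
  (mOmega : measurable Omega) (phi : T -> R -> \bar R) :
  weak_Phi mu Omega phi ->
  [<-> cond_A2 mu Omega phi;
       (* (2) *)
       forall sigma : R, 0 < sigma ->
         exists beta : R, exists h : T -> R,
           [/\ 0 < beta, beta <= 1, L1Linf_nonneg mu Omega h &
             ae2 mu Omega (fun x y => forall t : R, 0 <= t ->
               (0 <= phi y t)%E -> (phi y t <= sigma%:E)%E ->
               (phi x (beta * t)%R <= phi y t + (h x + h y)%:E)%E)];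
       (* (3) *)
       forall sigma : R, 0 < sigma ->
         exists beta : R, exists h : T -> R,
           [/\ 0 < beta, beta <= 1, L1Linf_nonneg mu Omega h &
             ae2 mu Omega (fun x y => forall tau : R, 0 <= tau -> tau <= sigma ->
               beta * phi_inv phi x (Num.max tau (h x + h y))
                 <= phi_inv phi y (Num.max tau (h x + h y)))];
       (* (4) *)
       forall sigma : R, 0 < sigma ->
         exists beta : R, exists h : T -> R,
           [/\ 0 < beta, beta <= 1, L1Linf_nonneg mu Omega h,
             {ae mu, forall x, Omega x -> h x <= sigma / 2} &
             ae2 mu Omega (fun x y => forall tau : R, h x + h y <= tau -> tau <= sigma ->
               beta * phi_inv phi x tau <= phi_inv phi y tau)];
       (* (5) *)
       cond_A0 mu Omega phi /\
       forall sigma : R, 0 < sigma ->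
         exists beta : R, exists h : T -> R,
           [/\ 0 < beta, beta <= 1, L1Linf_nonneg mu Omega h &
             ae2 mu Omega (fun x y => forall tau : R, h x + h y <= tau -> tau <= sigma ->
               beta * phi_inv phi x tau <= phi_inv phi y tau)]].
Proof.
move=> [Hnn _ [a [Ha Hae]]].
have [N0 [nN0 Hg]] := @ae_to_N _ _ _ mu Omega _ Hae.
exact: (@all5 _ _ _ mu Omega mOmega phi a Ha Hnn N0 nN0 Hg).
Qed.
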